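(* The Banach lattice $c_0$ is complemented in $FBL[c_0]$: there exist a Banach lattice homomorphism $u: c_0 \to FBL[c_0]$ which is an isometric embedding and a surjective Banach lattice homomorphism $T: FBL[c_0]\to c_0$ with $T\circ u = \mathrm{id}_{c_0}$.
   Context: For a Banach space $E$, for $x\in E$ let $\delta_x: E^*\to\mathbb{R}$, $\delta_x(x^* )=x^*(x)$. For $f: E^*\to\mathbb{R}$ put $$\|f\|_{FBL[E]} = \sup \Big\{\sum_{i = 1}^n |f(x_{i}^{*})| : n \in \mathbb{N},\ x_1^{*}, \ldots, x_n^{*} \in E^{*},\ \sup_{x \in B_E} \sum_{i=1}^n |x_i^{*}(x)| \leq 1 \Big\}.$$ The free Banach lattice $FBL[E]$ generated by $E$ is the closure, with respect to this norm, of the vector sublattice of $\mathbb{R}^{E^*}$ (pointwise operations and order) generated by $\{\delta_x : x\in E\}$. Here $E=c_0$ with $c_0^*=\ell_1$. In the paper the map $T$ is $T(f)=(f(e_1^* ),f(e_2^* ),\ldots)$, where $e_n^*$ are the unit vectors of $\ell_1$. *)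

(* Defs.v *)
From HB Require Import structures.
From mathcomp Require Import all_boot all_order all_algebra.
From mathcomp Require Import all_classical all_reals all_analysis.
Set Implicit Arguments. Unset Strict Implicit. Unset Printing Implicit Defensive.
Import Order.TTheory GRing.Theory Num.Theory.
Import numFieldNormedType.Exports.
Local Open Scope classical_set_scope.
Local Open Scope ring_scope.

Section FBL.
Variable R : realType.

Definition c0 (x : nat -> R) : Prop := x @ \oo --> (0 : R).

Definition c0norm (x : nat -> R) : R := sup [set `|x n| | n in [set: nat]].

(* E^* = l_1 : absolutely summable sequences *)
Definition summable (a : nat -> R) : Prop :=
  cvgn (series (fun k => `|a k|)).

Record l1 := L1 { l1seq :> nat -> R ; l1P : summable l1seq }.

Definition pair (a : l1) (x : nat -> R) : R :=
  limn (series (fun k => a k * x k)).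

Definition delta (x : nat -> R) : l1 -> R := fun a => pair a x.

Definition admissible (s : seq l1) : Prop :=
  forall x, c0 x -> c0norm x <= 1 -> \sum_(a <- s) `|pair a x| <= 1.

Definition fbl_norm (f : l1 -> R) : \bar R :=
  ereal_sup [set (\sum_(a <- s) `|f a|)%:E | s in admissible].

Inductive gen_lat : (l1 -> R) -> Prop :=
  | gen_delta x : c0 x -> gen_lat (delta x)
  | gen_add f g : gen_lat f -> gen_lat g -> gen_lat (fun a => f a + g a)
  | gen_scale (c : R) f : gen_lat f -> gen_lat (fun a => c * f a)
  | gen_max f g : gen_lat f -> gen_lat g -> gen_lat (fun a => Num.max (f a) (g a)).

Definition FBL (f : l1 -> R) : Prop :=
  forall e : R, 0 < e ->
    exists g, gen_lat g /\ (fbl_norm (fun a => (f a - g a)%R) < e%:E)%E.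

Definition lattice_hom_isometry_c0_FBL (u : (nat -> R) -> l1 -> R) : Prop :=
  [/\ forall x, c0 x -> FBL (u x),
      forall x y, c0 x -> c0 y -> u (fun n => x n + y n) = (fun a => u x a + u y a),
      forall (c : R) x, c0 x -> u (fun n => c * x n) = (fun a => c * u x a),
      forall x y, c0 x -> c0 y ->
        u (fun n => Num.max (x n) (y n)) = (fun a => Num.max (u x a) (u y a))
    & forall x, c0 x -> fbl_norm (u x) = (c0norm x)%:E].

Definition surj_lattice_hom_FBL_c0 (T : (l1 -> R) -> nat -> R) : Prop :=
  [/\ forall f, FBL f -> c0 (T f),
      (forall f g, FBL f -> FBL g -> T (fun a => f a + g a) = (fun n => T f n + T g n)) /\
      (forall (c : R) f, FBL f -> T (fun a => c * f a) = (fun n => c * T f n)),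
      forall f g, FBL f -> FBL g ->
        T (fun a => Num.max (f a) (g a)) = (fun n => Num.max (T f n) (T g n)),
      exists C : R, forall f, FBL f -> (((c0norm (T f))%:E <= C%:E * fbl_norm f)%E)
    & forall y, c0 y -> exists f, FBL f /\ T f = y].

End FBL.

(* Main.v *)
Require Import Defs.
From HB Require Import structures.
From mathcomp Require Import all_boot all_order all_algebra.
From mathcomp Require Import all_classical all_reals all_analysis.
From mathcomp Require Import ring lra.
Set Implicit Arguments. Unset Strict Implicit. Unset Printing Implicit Defensive.
Import Order.TTheory GRing.Theory Num.Theory.
Import numFieldNormedType.Exports.
Local Open Scope classical_set_scope.
Local Open Scope ring_scope.

Section Pf.
Variable R : realType.

Lemma series_fin (F : nat -> R) N : (forall m, (N <= m)%N -> F m = 0) ->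
  forall n, (N <= n)%N -> series F n = \sum_(m < N) F m.
Proof.
move=> HF n /subnK <-; elim: (n - N)%N => [|d IH].
  by rewrite /series /= add0n big_mkord.
rewrite /series /= addSn big_nat_recr //= HF ?addr0; last by rewrite leq_addl.
exact: IH.
Qed.

Lemma series_fin_cvg (F : nat -> R) N : (forall m, (N <= m)%N -> F m = 0) ->
  series F @ \oo --> \sum_(m < N) F m.
Proof.
move=> HF; apply: cvg_near_cst; exists N => // n /= Hn.
exact: series_fin.
Qed.

Lemma series_fin_lim (F : nat -> R) N : (forall m, (N <= m)%N -> F m = 0) ->
  limn (series F) = \sum_(m < N) F m.
Proof. by move=> HF; apply: cvg_lim => //; exact: series_fin_cvg. Qed.

Lemma sum_single (F : nat -> R) k N : (k < N)%N -> (forall m, m != k -> F m = 0) ->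
  \sum_(m < N) F m = F k.
Proof.
move=> kN HF; rewrite (bigD1 (Ordinal kN)) //= big1 ?addr0 // => i Hi.
apply: HF; apply: contra Hi => /eqP H; apply/eqP; apply: val_inj => /=. exact: H.
Qed.

Lemma series_single (F : nat -> R) k : (forall m, m != k -> F m = 0) ->
  limn (series F) = F k.
Proof.
move=> HF; rewrite (@series_fin_lim F k.+1) ?(@sum_single F k) // => m Hm.
by apply: HF; rewrite neq_ltn Hm orbT.
Qed.

Lemma series_single_cvg (F : nat -> R) k : (forall m, m != k -> F m = 0) ->
  cvgn (series F).
Proof.
move=> HF; apply/cvg_ex; exists (\sum_(m < k.+1) F m); apply: series_fin_cvg => m Hm.
by apply: HF; rewrite neq_ltn Hm orbT.
Qed.

Definition ev (n : nat) : nat -> R := fun k => if k == n then 1 else 0.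

Lemma ev_summable n : Defs.summable (ev n).
Proof.
apply: (@series_single_cvg _ n) => m Hm; by rewrite /ev (negbTE Hm) normr0.
Qed.

Definition e1 n : Defs.l1 R := @L1 R (ev n) (@ev_summable n).

Lemma pair_ev (a : Defs.l1 R) m : Defs.pair a (ev m) = a m.
Proof.
rewrite /pair (@series_single _ m) /ev ?eqxx ?mulr1 // => k Hk.
by rewrite (negbTE Hk) mulr0.
Qed.

Lemma pair_e1 n (x : nat -> R) : Defs.pair (e1 n) x = x n.
Proof.
rewrite /pair (@series_single _ n) /= /ev ?eqxx ?mul1r // => k Hk.
by rewrite (negbTE Hk) mul0r.
Qed.

Lemma pair_fin (a : Defs.l1 R) (y : nat -> R) N : (forall m, (N <= m)%N -> y m = 0) ->
  Defs.pair a y = \sum_(m < N) a m * y m.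
Proof. by move=> Hy; rewrite /pair (@series_fin_lim _ N) // => m /Hy ->; rewrite mulr0. Qed.

Lemma c0_fin (y : nat -> R) N : (forall m, (N <= m)%N -> y m = 0) -> Defs.c0 y.
Proof. by move=> Hy; apply: cvg_near_cst; exists N => // n /= /Hy. Qed.


Lemma c0_bounded (x : nat -> R) : Defs.c0 x -> exists M, forall n, `|x n| <= M.
Proof.
move=> Hx; have Hc : cvgn x by apply/cvg_ex; exists 0.
have := cvg_seq_bounded Hc; case=> M [_ HM].
exists (M + 1); move=> n; apply: (HM (M+1)); first by rewrite ltrDl.
by [].
Qed.

Lemma c0_le (x : nat -> R) n : Defs.c0 x -> `|x n| <= c0norm x.
Proof.
move=> Hx; have [M HM] := c0_bounded Hx.
apply: ub_le_sup; last by exists n.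
by exists M => _ [m _ <-].
Qed.

Lemma c0norm_le (x : nat -> R) B : (forall n, `|x n| <= B) -> c0norm x <= B.
Proof.
move=> HB; apply: ge_sup; first by exists `|x 0%N|, 0%N.
by move=> _ [m _ <-].
Qed.

Lemma c0norm_ge0 (x : nat -> R) : Defs.c0 x -> 0 <= c0norm x.
Proof. by move=> Hx; apply: le_trans (c0_le 0 Hx). Qed.

Lemma fbl_ge (f : Defs.l1 R -> R) s : admissible s ->
  ((\sum_(a <- s) `|f a|)%:E <= fbl_norm f)%E.
Proof. by move=> Hs; apply: ereal_sup_ubound; exists s. Qed.

Lemma fbl_le (f : Defs.l1 R -> R) B :
  (forall s, admissible s -> \sum_(a <- s) `|f a| <= B) -> (fbl_norm f <= B%:E)%E.
Proof. by move=> H; apply: ge_ereal_sup => _ [s Hs <-]; rewrite lee_fin; apply: H. Qed.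

Lemma adm_e1 n : admissible [:: e1 n].
Proof.
move=> x Hx Hn; rewrite big_seq1 pair_e1; exact: le_trans (c0_le n Hx) Hn.
Qed.

Lemma fbl_ge_e1 (f : Defs.l1 R -> R) n : ((`|f (e1 n)|)%:E <= fbl_norm f)%E.
Proof. by have := fbl_ge f (adm_e1 n); rewrite big_seq1. Qed.


Definition Tm (f : Defs.l1 R -> R) : nat -> R := fun n => f (e1 n).

Lemma max_cvg0 (u v : nat -> R) : u @ \oo --> 0 -> v @ \oo --> 0 ->
  (fun n => Num.max (u n) (v n)) @ \oo --> 0.
Proof.
move=> /cvgr0Pnorm_lt Hu /cvgr0Pnorm_lt Hv; apply/cvgr0Pnorm_lt => e he.
near=> n.
have h1 : `|u n| < e by near: n; exact: Hu.
have h2 : `|v n| < e by near: n; exact: Hv.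
by case: (leP (u n) (v n)).
Unshelve. all: end_near.
Qed.

Lemma gen_lat_c0 g : gen_lat g -> Defs.c0 (Tm g).
Proof.
elim => {g}.
- move=> x Hx; rewrite /Tm /delta. 
  have -> : (fun n => Defs.pair (e1 n) x) = x by apply: funext => n; rewrite pair_e1.
  exact: Hx.
- move=> f g _ Hf _ Hg; rewrite /Defs.c0 /Tm -(addr0 0); exact: cvgD Hf Hg.
- move=> c f _ Hf; rewrite /Defs.c0 /Tm -(mulr0 c); exact: cvgMr Hf.
- move=> f g _ Hf _ Hg; exact: max_cvg0 Hf Hg.
Qed.

Lemma FBL_c0 f : FBL f -> Defs.c0 (Tm f).
Proof.
move=> Hf; apply/cvgr0Pnorm_lt => e he.
have he2 : 0 < e / 2 by rewrite divr_gt0.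
have [g [Hg Hfg]] := Hf _ he2.
have := gen_lat_c0 Hg; move/cvgr0Pnorm_lt => Hg0.
near=> n.
have h1 : `|Tm g n| < e / 2 by near: n; exact: Hg0.
have h2 : `|f (e1 n) - g (e1 n)| < e / 2.
  by rewrite -lte_fin; apply: le_lt_trans Hfg; exact: (fbl_ge_e1 (fun a => f a - g a) n).
rewrite /Tm in h1 *.
rewrite (_ : f (e1 n) = (f (e1 n) - g (e1 n)) + g (e1 n)); last by rewrite subrK.
apply: le_lt_trans (ler_normD _ _) _.
by rewrite (splitr e) ltrD.
Unshelve. all: end_near.
Qed.

Lemma Tm_bound f : ((c0norm (Tm f))%:E <= 1%:E * fbl_norm f)%E.
Proof.
rewrite mul1e; case E : (fbl_norm f) => [r| |].
- rewrite lee_fin; apply: c0norm_le => n; rewrite -lee_fin -E; exact: fbl_ge_e1.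
- exact: leey.
- by have := fbl_ge_e1 f 0; rewrite E leeNy_eq.
Qed.

Lemma FBL_delta (y : nat -> R) : Defs.c0 y -> FBL (delta y).
Proof.
move=> Hy e he; exists (delta y); split; first exact: gen_delta.
have H0 : (fbl_norm (fun a => (delta y a - delta y a)%R) <= 0%:E)%E.
  by apply: fbl_le => s _; rewrite big1 // => a _; rewrite subrr normr0.
by apply: le_lt_trans H0 _; rewrite lte_fin.
Qed.

Lemma Tm_delta (y : nat -> R) : Tm (delta y) = y.
Proof. by apply: funext => n; rewrite /Tm /delta pair_e1. Qed.

Lemma Tm_surj : surj_lattice_hom_FBL_c0 Tm.
Proof.
split.
- exact: FBL_c0.
- by [].
- by [].
- exists 1 => f _; exact: Tm_bound.
- move=> y Hy; exists (delta y); split; [exact: FBL_delta | exact: Tm_delta].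
Qed.


Definition upd (y : nat -> R) N v : nat -> R := fun m => if m == N then v else y m.

Fixpoint Av N (g : (nat -> R) -> R) : R :=
  match N with
  | 0%N => g (fun _ => 0)
  | N'.+1 => (Av N' (fun y => g (upd y N' 1)) + Av N' (fun y => g (upd y N' (-1)))) / 2
  end.

Definition good N (y : nat -> R) := (forall m, (N <= m)%N -> y m = 0) /\ (forall m, `|y m| <= 1).

Lemma good_upd N y v : good N y -> `|v| <= 1 -> good N.+1 (upd y N v).
Proof.
move=> [H1 H2] Hv; split.
  move=> m Hm; rewrite /upd; have -> : (m == N) = false by apply/negbTE; rewrite neq_ltn Hm orbT.
  by apply: H1; apply: ltnW.
by move=> m; rewrite /upd; case: (m == N).
Qed.

Lemma Av_le N g1 g2 : (forall y, good N y -> g1 y <= g2 y) -> Av N g1 <= Av N g2.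
Proof.
elim: N g1 g2 => [|N IH] g1 g2 H /=.
  by apply: H; split => // m; rewrite normr0.
rewrite ler_pM2r ?invr_gt0 //; apply: lerD; apply: IH => y Hy; apply: H;
  apply: good_upd => //; by rewrite ?normrN normr1.
Qed.

Lemma Av_cst N c : Av N (fun _ => c) = c.
Proof. elim: N c => [|N IH] c //=; rewrite !IH; lra. Qed.

Lemma Av_add N g1 g2 : Av N (fun y => g1 y + g2 y) = Av N g1 + Av N g2.
Proof.
elim: N g1 g2 => [|N IH] g1 g2 //=; rewrite !IH; by rewrite -mulrDl addrACA.
Qed.

Lemma Av_scale N k g : Av N (fun y => k * g y) = k * Av N g.
Proof.
elim: N g => [|N IH] g //=; rewrite !IH; by rewrite -mulrDr mulrA.
Qed.

Lemma Av_sum N (s : seq (Defs.l1 R)) (h : Defs.l1 R -> (nat -> R) -> R) :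
  Av N (fun y => \sum_(a <- s) h a y) = \sum_(a <- s) Av N (h a).
Proof.
elim: s => [|a s IH].
  have -> : (fun y => \sum_(a <- [::]) h a y) = (fun _ => 0) by apply: funext => y; rewrite big_nil.
  by rewrite Av_cst big_nil.
rewrite big_cons -IH -Av_add; congr Av; apply: funext => y; by rewrite big_cons.
Qed.

Lemma Av_row N (c : R) (b : nat -> R) :
  `|c| <= Av N (fun y => `|c + \sum_(m < N) b m * y m|) /\
  forall k, (k < N)%N -> `|b k| <= Av N (fun y => `|c + \sum_(m < N) b m * y m|).
Proof.
elim: N c => [|N IH] c.
  by split => //=; rewrite big_ord0 addr0.
pose u (y : nat -> R) := c + \sum_(m < N) b m * y m.
have E : Av N.+1 (fun y => `|c + \sum_(m < N.+1) b m * y m|) =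
         Av N (fun y => (`|u y + b N| + `|u y - b N|) / 2).
  have Es : forall v y, \sum_(m < N.+1) b m * upd y N v m = \sum_(m < N) b m * y m + b N * v.
    move=> v y; rewrite big_ord_recr /= /upd eqxx; congr (_ + _); apply: eq_bigr => i _.
    by rewrite (ltn_eqF (ltn_ord i)).
  rewrite /=.
  have -> : (fun y => `|c + \sum_(m < N.+1) b m * upd y N 1 m|) = (fun y => `|u y + b N|).
    by apply: funext => y; rewrite Es mulr1 /u addrA.
  have -> : (fun y => `|c + \sum_(m < N.+1) b m * upd y N (-1) m|) = (fun y => `|u y - b N|).
    by apply: funext => y; rewrite Es mulrN1 /u addrA.
  have -> : (fun y => (`|u y + b N| + `|u y - b N|) / 2) =
            (fun y => 2^-1 * (`|u y + b N| + `|u y - b N|)) by apply: funext => y; rewrite mulrC.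
  by rewrite Av_scale Av_add mulrC.
have Hu : forall y, `|u y| <= (`|u y + b N| + `|u y - b N|) / 2.
  move=> y; have H := ler_normD (u y + b N) (u y - b N).
  have E2 : (u y + b N) + (u y - b N) = u y + u y by ring.
  rewrite E2 -mulr2n normrMn mulr2n in H; lra.
have Hb : forall y, `|b N| <= (`|u y + b N| + `|u y - b N|) / 2.
  move=> y; have H := ler_normB (u y + b N) (u y - b N).
  have E2 : (u y + b N) - (u y - b N) = b N + b N by ring.
  rewrite E2 -mulr2n normrMn mulr2n in H; lra.
have [IH1 IH2] := IH c.
have Hle : Av N (fun y => `|u y|) <= Av N (fun y => (`|u y + b N| + `|u y - b N|) / 2).
  by apply: Av_le => y _; apply: Hu.
rewrite E; split; first exact: le_trans IH1 Hle.
move=> k; rewrite ltnS leq_eqVlt => /orP [/eqP ->|Hk].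
  by rewrite -{1}(Av_cst N `|b N|); apply: Av_le => y _; apply: Hb.
exact: le_trans (IH2 k Hk) Hle.
Qed.


Fixpoint bnd (p : Defs.l1 R -> nat) (s : seq (Defs.l1 R)) : nat :=
  match s with [::] => 0%N | a :: s' => maxn (p a).+1 (bnd p s') end.

Lemma rad_aux p s N : (bnd p s <= N)%N ->
  \sum_(a <- s) `|a (p a)| <= \sum_(a <- s) Av N (fun y => `|\sum_(m < N) a m * y m|).
Proof.
elim: s => [|a s IH]; first by rewrite !big_nil.
rewrite /= geq_max => /andP [H1 H2]; rewrite !big_cons; apply: lerD; last exact: IH.
have := (Av_row N 0 a).2 (p a) H1.
have -> : (fun y : nat -> R => `|0 + \sum_(m < N) a m * y m|) = (fun y => `|\sum_(m < N) a m * y m|).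
  by apply: funext => y; rewrite add0r.
by [].
Qed.

Lemma rademacher (s : seq (Defs.l1 R)) (p : Defs.l1 R -> nat) : admissible s ->
  \sum_(a <- s) `|a (p a)| <= 1.
Proof.
move=> Hs; apply: le_trans (@rad_aux p s _ (leqnn _)) _.
rewrite -Av_sum; set N := bnd p s.
apply: le_trans (@Av_le N _ (fun _ => 1) _) _; last by rewrite Av_cst.
move=> y [Hy1 Hy2]; have Hc := c0_fin Hy1; have Hn := c0norm_le Hy2.
apply: le_trans (Hs y Hc Hn); rewrite le_eqVlt; apply/orP; left; apply/eqP.
by apply: eq_bigr => a _; rewrite (pair_fin a Hy1).
Qed.


Local Notation q := (2^-1 : R).

Lemma q_gt0 : 0 < q. Proof. by rewrite invr_gt0. Qed.
Lemma q_le1 : q <= 1. Proof. by rewrite invf_le1 // ler1n. Qed.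
Lemma qpow_ge0 m : 0 <= q ^+ m. Proof. exact: exprn_ge0 (ltW q_gt0). Qed.
Lemma qpow_gt0 m : 0 < q ^+ m. Proof. exact: exprn_gt0 q_gt0. Qed.
Lemma P2q k : (2 : R) ^+ k * q ^+ k = 1.
Proof. by rewrite -exprMn mulfV // expr1n. Qed.

Definition wt (a : Defs.l1 R) m := `|a m| * q ^+ m.

Lemma wt_ge0 a m : 0 <= wt a m.
Proof. by rewrite mulr_ge0 // qpow_ge0. Qed.

Lemma wt_le a m : wt a m <= `|a m|.
Proof. apply: ler_piMr => //; apply: exprn_ile1; [exact: ltW q_gt0 | exact: q_le1]. Qed.

Lemma S_cvg a : cvgn (series (wt a)).
Proof.
apply: (@series_le_cvg R (wt a) (fun k => `|a k|)).
- exact: wt_ge0.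
- move=> n; exact: normr_ge0.
- exact: wt_le.
- have H : Defs.summable a := @l1P R a; exact: H.
Qed.

Definition S a := limn (series (wt a)).
Definition SN N a := \sum_(m < N) wt a m.

Lemma series_SN a N : series (wt a) N = SN N a.
Proof. by rewrite /series /= big_mkord. Qed.

Lemma SN_le_S a N : SN N a <= S a.
Proof.
rewrite -series_SN; apply: nondecreasing_cvgn_le; last exact: S_cvg.
by apply: nondecreasing_series => n _ _; exact: wt_ge0.
Qed.

Lemma SN_ge0 a N : 0 <= SN N a.
Proof. by apply: sumr_ge0 => i _; exact: wt_ge0. Qed.

Lemma sum_ge_term (F : nat -> R) i N : (forall m, 0 <= F m) -> (i < N)%N ->
  F i <= \sum_(m < N) F m.
Proof.
move=> H0 iN; rewrite (bigD1 (Ordinal iN)) //= lerDl.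
by apply: sumr_ge0 => j _.
Qed.

Lemma sum_ge_two (F : nat -> R) i j N : (forall m, 0 <= F m) -> i != j -> (i < N)%N -> (j < N)%N ->
  F i + F j <= \sum_(m < N) F m.
Proof.
move=> H0 ij iN jN; rewrite (bigD1 (Ordinal iN)) //= lerD2l.
rewrite (bigD1 (Ordinal jN)) /=; last by apply: contra ij => /eqP [->].
by rewrite lerDl; apply: sumr_ge0 => k _.
Qed.

Lemma SN_two a n k N : n != k -> (n < N)%N -> (k < N)%N -> wt a n + wt a k <= SN N a.
Proof. by move=> nk nN kN; apply: sum_ge_two => // m; exact: wt_ge0. Qed.

Lemma S_two a n k : n != k -> wt a n + wt a k <= S a.
Proof.
move=> nk; apply: le_trans (SN_le_S a (maxn n k).+1).
by apply: SN_two => //; rewrite ltnS ?leq_maxl ?leq_maxr.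
Qed.

Lemma S_one a n : wt a n <= S a.
Proof.
apply: le_trans (SN_le_S a n.+1); apply: sum_ge_term => // m; exact: wt_ge0.
Qed.

Lemma S_e1 k : S (e1 k) = q ^+ k.
Proof.
rewrite /S (@series_single _ k) /wt /= /ev ?eqxx ?normr1 ?mul1r // => m Hm.
by rewrite (negbTE Hm) normr0 mul0r.
Qed.


Definition phiT (T : Defs.l1 R -> R) n (a : Defs.l1 R) :=
  Num.max 0 ((1 + q ^+ n) * `|a n| - 2 ^+ n * \sum_(m < n) `|a m| - T a).

Lemma phiT_ge0 T n a : 0 <= phiT T n a.
Proof. by rewrite /phiT le_max lexx. Qed.

Lemma phiT_pos T n a : 0 < phiT T n a ->
  0 < (1 + q ^+ n) * `|a n| - 2 ^+ n * \sum_(m < n) `|a m| - T a.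
Proof. by rewrite /phiT lt_max ltxx. Qed.

Lemma phiT_disj T a n k : (n < k)%N -> wt a n + wt a k <= T a ->
  0 < phiT T n a -> 0 < phiT T k a -> False.
Proof.
move=> nk HT /phiT_pos Hn /phiT_pos Hk.
have Hs0 : 0 <= \sum_(m < n) `|a m| by apply: sumr_ge0.
have Hsk : `|a n| <= \sum_(m < k) `|a m| by apply: (@sum_ge_term (fun m => `|a m|)).
have P0 := qpow_ge0 n; have P1 := qpow_gt0 k.
have Q0 : 0 <= 2 ^+ n :> R by apply: exprn_ge0.
have Q1 : 0 <= 2 ^+ k :> R by apply: exprn_ge0.
have E := P2q k.
move: HT; rewrite /wt => HT.
have H1 : q ^+ k * `|a k| < `|a n|.
  have : 0 <= 2 ^+ n * \sum_(m < n) `|a m| by apply: mulr_ge0.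
  move: Hn HT; set A := `|a n|; set B := `|a k|; set Ta := T a.
  set Qn := q ^+ n; set Qk := q ^+ k; set Pn := 2 ^+ n; set Sg := \sum_(m < n) `|a m|; lra.
have H2 : (2 ^+ k) * `|a n| < `|a k|.
  have : 2 ^+ k * `|a n| <= 2 ^+ k * \sum_(m < k) `|a m| by apply: ler_wpM2l.
  have := wt_ge0 a n; rewrite /wt.
  move: Hk HT; set A := `|a n|; set B := `|a k|; set Ta := T a.
  set Qn := q ^+ n; set Qk := q ^+ k; set Pk := 2 ^+ k; set Sg := \sum_(m < k) `|a m|; lra.
have : q ^+ k * (2 ^+ k * `|a n|) < q ^+ k * `|a k| by rewrite ltr_pM2l.
rewrite mulrC in E; rewrite mulrA E mul1r => H3.
by have := lt_trans H3 H1; rewrite ltxx.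
Qed.

Definition phi := phiT S.
Definition psi N := phiT (SN N).

Lemma phi_disj a n k : n != k -> 0 < phi n a -> 0 < phi k a -> False.
Proof.
move=> nk; case: (ltngtP n k) => [H|H|H]; last by rewrite H eqxx in nk.
- move=> Hn Hk; apply: (phiT_disj H _ Hn Hk); exact: S_two.
- move=> Hn Hk; apply: (phiT_disj H _ Hk Hn); apply: S_two; by rewrite eq_sym.
Qed.

Lemma psi_disj N a n k : n != k -> (n < N)%N -> (k < N)%N ->
  0 < psi N n a -> 0 < psi N k a -> False.
Proof.
move=> nk nN kN; case: (ltngtP n k) => [H|H|H]; last by rewrite H eqxx in nk.
- move=> Hn Hk; apply: (phiT_disj H _ Hn Hk); exact: SN_two.
- move=> Hn Hk; apply: (phiT_disj H _ Hk Hn); apply: SN_two => //; by rewrite eq_sym.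
Qed.

Lemma phi_le n a : phi n a <= `|a n|.
Proof.
rewrite /phi /phiT ge_max normr_ge0 /=.
have := S_one a n; rewrite /wt => H.
have : 0 <= 2 ^+ n * \sum_(m < n) `|a m|.
  by apply: mulr_ge0; [apply: exprn_ge0 | apply: sumr_ge0].
move: H; set A := `|a n|; set Q := q ^+ n; lra.
Qed.

Lemma phi_psi N n a : phi n a <= psi N n a.
Proof.
rewrite /phi /psi /phiT ge_max; apply/andP; split; rewrite le_max; first by rewrite lexx.
apply/orP; right; have := SN_le_S a N; lra.
Qed.

Lemma psi_phi N n a : psi N n a - phi n a <= S a - SN N a.
Proof.
have := SN_le_S a N; rewrite /phi /psi /phiT.
set X := (1 + q ^+ n) * `|a n| - 2 ^+ n * \sum_(m < n) `|a m|.
move=> H.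
have h1 : 0 <= Num.max 0 (X - S a) by rewrite le_max lexx.
have h2 : X - S a <= Num.max 0 (X - S a) by rewrite le_max lexx orbT.
move: h1 h2; set M := Num.max 0 (X - S a) => h1 h2.
have : Num.max 0 (X - SN N a) <= S a - SN N a + M.
  rewrite ge_max; apply/andP; split; lra.
lra.
Qed.


Lemma ev_norm k m : `|ev k m| = if m == k then 1 else 0.
Proof. by rewrite /ev; case: (m == k); rewrite ?normr1 ?normr0. Qed.

Lemma sum_e1_below k : \sum_(m < k) `|e1 k m| = 0.
Proof.
by apply: big1 => i _; rewrite /= ev_norm (ltn_eqF (ltn_ord i)).
Qed.

Lemma phi_e1_eq k : phi k (e1 k) = 1.
Proof.
rewrite /phi /phiT S_e1 sum_e1_below /= ev_norm eqxx mulr1 mulr0 subr0.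
rewrite addrK; apply/eqP; rewrite eq_le ge_max ler01 lexx le_max lexx orbT //.
Qed.

Lemma phi_e1_neq n k : n != k -> phi n (e1 k) = 0.
Proof.
move=> nk; apply/eqP; rewrite eq_le phiT_ge0 andbT /phi /phiT ge_max lexx /=.
rewrite S_e1 /= ev_norm (negbTE nk) mulr0 sub0r.
have H1 : 0 <= 2 ^+ n * \sum_(m < n) `|e1 k m| :> R.
  by apply: mulr_ge0; [apply: exprn_ge0 | apply: sumr_ge0].
have H2 := qpow_ge0 k.
move: H1 H2; set A := 2 ^+ n * _; set B := q ^+ k; lra.
Qed.

Definition kof (a : Defs.l1 R) := xget 0%N [set k | 0 < phi k a].

Lemma kof_spec a n : n != kof a -> phi n a = 0.
Proof.
move=> Hn; apply/eqP; rewrite eq_le phiT_ge0 andbT leNgt; apply/negP => Hpos.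
have Hk : 0 < phi (kof a) a.
  have := @xgetPex _ 0%N [set k | 0 < phi k a] (ex_intro _ n Hpos); by [].
exact: phi_disj Hn Hpos Hk.
Qed.

Lemma kof_e1 k : kof (e1 k) = k.
Proof.
case: (eqVneq k (kof (e1 k))) => [//|H].
by have := kof_spec H; rewrite phi_e1_eq => /eqP; rewrite oner_eq0.
Qed.

Definition um (x : nat -> R) (a : Defs.l1 R) := x (kof a) * phi (kof a) a.

Lemma Tm_um x : Tm (um x) = x.
Proof. by apply: funext => n; rewrite /Tm /um kof_e1 phi_e1_eq mulr1. Qed.

Lemma um_norm_le x : Defs.c0 x -> (fbl_norm (um x) <= (c0norm x)%:E)%E.
Proof.
move=> Hx; apply: fbl_le => s Hs.
apply: (@le_trans _ _ (\sum_(a <- s) c0norm x * `|a (kof a)|)).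
  apply: ler_sum => a _; rewrite /um normrM [`|phi _ _|]ger0_norm; last exact: phiT_ge0.
  apply: ler_pM; [exact: normr_ge0 | exact: phiT_ge0 | exact: c0_le | exact: phi_le].
rewrite -mulr_sumr -{2}(mulr1 (c0norm x)); apply: ler_wpM2l; first exact: c0norm_ge0.
exact: rademacher.
Qed.

Lemma um_norm x : Defs.c0 x -> fbl_norm (um x) = (c0norm x)%:E.
Proof.
move=> Hx; apply/le_anti/andP; split; first exact: um_norm_le.
case E : (fbl_norm (um x)) => [r| |].
- rewrite lee_fin; apply: c0norm_le => n.
  by have := fbl_ge_e1 (um x) n; rewrite E lee_fin /um kof_e1 phi_e1_eq mulr1.
- exact: leey.
- by have := fbl_ge_e1 (um x) 0; rewrite E leeNy_eq.
Qed.


Lemma gl_ext (f g : Defs.l1 R -> R) : gen_lat f -> (forall a, f a = g a) -> gen_lat g.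
Proof. by move=> Hf E; have -> : g = f by apply: funext => a; rewrite E. Qed.

Lemma c0_ev m : Defs.c0 (ev m).
Proof. apply: (@c0_fin _ m.+1) => k Hk; rewrite /ev; have -> : (k == m) = false by apply/negbTE; rewrite neq_ltn Hk orbT. by []. Qed.

Lemma gl_coord m : gen_lat (fun a : Defs.l1 R => a m).
Proof. by apply: (gl_ext (gen_delta (c0_ev m))) => a; rewrite /delta pair_ev. Qed.

Lemma gl_abs m : gen_lat (fun a : Defs.l1 R => `|a m|).
Proof.
apply: (gl_ext (gen_max (gl_coord m) (gen_scale (-1) (gl_coord m)))) => a.
by rewrite mulN1r maxrN.
Qed.

Lemma gl_zero : gen_lat (fun _ : Defs.l1 R => 0 : R).
Proof. by apply: (gl_ext (gen_scale 0 (gl_coord 0))) => a; rewrite mul0r. Qed.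

Lemma gl_sub (f g : Defs.l1 R -> R) : gen_lat f -> gen_lat g -> gen_lat (fun a => f a - g a).
Proof.
move=> Hf Hg; apply: (gl_ext (gen_add Hf (gen_scale (-1) Hg))) => a; by rewrite mulN1r.
Qed.

Lemma gl_sum N (F : nat -> Defs.l1 R -> R) : (forall n, gen_lat (F n)) ->
  gen_lat (fun a => \sum_(n < N) F n a).
Proof.
move=> HF; elim: N => [|N IH].
  by apply: (gl_ext gl_zero) => a; rewrite big_ord0.
by apply: (gl_ext (gen_add IH (HF N))) => a; rewrite big_ord_recr.
Qed.

Lemma gl_psi N n : gen_lat (psi N n).
Proof.
have H1 : gen_lat (fun a : Defs.l1 R => (1 + q ^+ n) * `|a n|) := gen_scale _ (gl_abs n).
have H2 : gen_lat (fun a : Defs.l1 R => 2 ^+ n * \sum_(m < n) `|a m|).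
  exact: gen_scale _ (@gl_sum n (fun m (a : Defs.l1 R) => `|a m|) (fun m => gl_abs m)).
have H3 : gen_lat (SN N).
  have Hw : forall m, gen_lat (fun a : Defs.l1 R => wt a m).
    by move=> m; apply: (gl_ext (gen_scale (q ^+ m) (gl_abs m))) => a; rewrite /wt mulrC.
  exact: (@gl_sum N (fun m a => wt a m) Hw).
exact: gen_max gl_zero (gl_sub (gl_sub H1 H2) H3).
Qed.

Definition gN (x : nat -> R) N (a : Defs.l1 R) := \sum_(n < N) x n * psi N n a.

Lemma gl_gN x N : gen_lat (gN x N).
Proof. exact: (@gl_sum N (fun n a => x n * psi N n a) (fun n => gen_scale _ (gl_psi N n))). Qed.


Lemma geo N K : (N <= K)%N -> \sum_(N <= m < K) q ^+ m = 2 * q ^+ N - 2 * q ^+ K.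
Proof.
move=> /subnK <-; elim: (K - N)%N => [|d IH].
  by rewrite add0n big_geq // subrr.
rewrite addSn big_nat_recr /=; last by rewrite leq_addl.
rewrite IH exprS mulrA mulfV // mul1r.
set A := q ^+ N; set B := q ^+ (d + N); lra.
Qed.

Lemma SN_diff a N K : (N <= K)%N -> SN K a - SN N a = \sum_(N <= m < K) wt a m.
Proof.
move=> HK; rewrite /SN -!(big_mkord xpredT) (big_cat_nat (leq0n N) HK) /=.
by rewrite addrC addrK.
Qed.

Lemma SN_cvg a : (fun K => SN K a) @ \oo --> S a.
Proof.
have -> : (fun K => SN K a) = series (wt a) by apply: funext => K; rewrite series_SN.
exact: S_cvg.
Qed.

Lemma sumSN_cvg (s : seq (Defs.l1 R)) :
  (fun K => \sum_(a <- s) SN K a) @ \oo --> \sum_(a <- s) S a.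
Proof.
elim: s => [|a s IH].
  have -> : (fun K => \sum_(a <- [::]) SN K a) = (fun _ => 0) by apply: funext => K; rewrite big_nil.
  rewrite big_nil; exact: cvg_cst.
have -> : (fun K => \sum_(b <- a :: s) SN K b) = (fun K => SN K a + \sum_(b <- s) SN K b).
  by apply: funext => K; rewrite big_cons.
rewrite big_cons; apply: cvgD; [exact: SN_cvg | exact: IH].
Qed.

Lemma tail_bound s N : admissible s -> \sum_(a <- s) (S a - SN N a) <= 2 * q ^+ N.
Proof.
move=> Hs.
have HK : forall K, (N <= K)%N -> \sum_(a <- s) (SN K a - SN N a) <= 2 * q ^+ N.
  move=> K HK.
  rewrite (eq_bigr _ (fun a _ => SN_diff a HK)) exchange_big /=.
  apply: (@le_trans _ _ (\sum_(N <= m < K) q ^+ m)); last first.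
    by rewrite geo // lerBlDr lerDl mulr_ge0 // qpow_ge0.
  apply: ler_sum => m _; rewrite /wt -mulr_suml -{2}(mul1r (q ^+ m)).
  apply: ler_wpM2r; first exact: qpow_ge0.
  exact: (rademacher (fun _ => m) Hs).
rewrite sumrB lerBlDr.
have E : limn (fun K => \sum_(a <- s) SN K a) = \sum_(a <- s) S a.
  by apply: cvg_lim => //; exact: sumSN_cvg.
rewrite -E; apply: limr_le; first by apply/cvg_ex; eexists; exact: sumSN_cvg.
exists N => // K /= HNK; have := HK K HNK; rewrite sumrB lerBlDr; by [].
Qed.


Lemma sum_single' (F : nat -> R) k N : (k < N)%N ->
  (forall m, (m < N)%N -> m != k -> F m = 0) -> \sum_(m < N) F m = F k.
Proof.
move=> kN HF; rewrite (bigD1 (Ordinal kN)) //= big1 ?addr0 // => i Hi.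
apply: HF => //; apply: contra Hi => /eqP H; apply/eqP; apply: val_inj => /=.
Qed.

Lemma psi_zero N a n k : (n < N)%N -> (k < N)%N -> n != k -> 0 < psi N k a -> psi N n a = 0.
Proof.
move=> nN kN nk Hk; apply/eqP; rewrite eq_le phiT_ge0 andbT leNgt; apply/negP => Hn.
exact: (psi_disj nk nN kN Hn Hk).
Qed.

Lemma point x N (M eps : R) a : 0 <= eps -> 0 <= M -> (forall n, `|x n| <= M) ->
  (forall n, (N <= n)%N -> `|x n| <= eps) ->
  `|um x a - gN x N a| <= eps * `|a (kof a)| + M * (S a - SN N a).
Proof.
move=> He HM0 HM Heps.
set k := kof a; set t := S a - SN N a.
have Ht : 0 <= t by rewrite subr_ge0 SN_le_S.
have Hspec : forall n, n != k -> phi n a = 0 by move=> n; exact: kof_spec.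
have Hek : 0 <= eps * `|a k| by apply: mulr_ge0.
case: (boolP ((0 < phi k a) && (k < N)%N)) => [/andP [Hpos kN]|HA].
  have Eg : gN x N a = x k * psi N k a.
    rewrite /gN (@sum_single' (fun n => x n * psi N n a) k) //.
    move=> m mN mk; rewrite (@psi_zero N a m k) ?mulr0 //.
    exact: lt_le_trans Hpos (phi_psi N k a).
  rewrite /um -/k Eg -mulrBr normrM distrC [`|psi N k a - _|]ger0_norm; last by rewrite subr_ge0 phi_psi.
  apply: ler_wpDl => //; apply: ler_pM => //; first by rewrite subr_ge0 phi_psi.
  exact: psi_phi.
have Hphi0 : forall n, (n < N)%N -> phi n a = 0.
  move=> n nN; case: (eqVneq n k) => [En|nk]; last exact: Hspec.
  rewrite En; apply/eqP; rewrite eq_le phiT_ge0 andbT leNgt; apply/negP => Hp.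
  by move: HA; rewrite Hp -En nN.
have Hu : `|um x a| <= eps * `|a k|.
  rewrite /um -/k normrM [`|phi _ _|]ger0_norm; last exact: phiT_ge0.
  case: (ltP 0 (phi k a)) => Hp.
    have kN : (N <= k)%N by rewrite leqNgt; apply: contra HA => kN; rewrite Hp kN.
    apply: ler_pM => //; [exact: phiT_ge0 | exact: Heps | exact: phi_le].
  have -> : phi k a = 0 by apply/eqP; rewrite eq_le Hp phiT_ge0.
  by rewrite mulr0.
have Hg : `|gN x N a| <= M * t.
  case: (pselect (exists n1, (n1 < N)%N /\ 0 < psi N n1 a)) => [[n1 [n1N Hp1]]|Hno].
    rewrite /gN (@sum_single' (fun n => x n * psi N n a) n1) //; last first.
      by move=> m mN mn; rewrite (@psi_zero N a m n1) ?mulr0.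
    rewrite normrM [`|psi _ _ _|]ger0_norm; last exact: phiT_ge0.
    apply: ler_pM => //; first exact: phiT_ge0.
    by have := psi_phi N n1 a; rewrite Hphi0 // subr0.
  rewrite /gN big1 ?normr0 ?mulr_ge0 // => i _.
  have -> : psi N i a = 0.
    apply/eqP; rewrite eq_le phiT_ge0 andbT leNgt; apply/negP => Hp.
    by apply: Hno; exists i.
  by rewrite mulr0.
apply: le_trans (ler_normB _ _) _; exact: lerD.
Qed.


Lemma FBL_um x : Defs.c0 x -> FBL (um x).
Proof.
move=> Hx e he.
set M := c0norm x.
have HM0 : 0 <= M := c0norm_ge0 Hx.
have HM : forall n, `|x n| <= M by move=> n; exact: c0_le.
set e3 := e / 3.
have he3 : 0 < e3 by rewrite divr_gt0.
have := Hx; move/cvgr0Pnorm_lt => /(_ e3 he3) [N0 _ HN0].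
have Hq : (fun N => (2 * (M + 1)) * q ^+ N) @ \oo --> 0.
  rewrite -(mulr0 (2 * (M + 1))); apply: cvgMr; apply: cvg_expr.
  by rewrite ger0_norm ?invr_ge0 // invf_lt1 // ltr1n.
move/cvgr0Pnorm_lt : Hq => /(_ e3 he3) [N1 _ HN1].
set N := maxn N0 N1.
have HxN : forall n, (N <= n)%N -> `|x n| <= e3.
  move=> n Hn; apply: ltW; apply: HN0; apply: leq_trans Hn; exact: leq_maxl.
have HqN : M * (2 * q ^+ N) <= e3.
  have := HN1 N (leq_maxr N0 N1); rewrite /= ger0_norm; last first.
    by rewrite mulr_ge0 ?qpow_ge0 // mulr_ge0 // addr_ge0.
  move=> H; apply: ltW; apply: le_lt_trans H.
  have hq := qpow_ge0 N; move: hq; set Q := q ^+ N; nra.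
exists (gN x N); split; first exact: gl_gN.
have Hb : (fbl_norm (fun a => (um x a - gN x N a)%R) <= (e3 + e3)%:E)%E.
  apply: fbl_le => s Hs.
  apply: (@le_trans _ _ (\sum_(a <- s) (e3 * `|a (kof a)| + M * (S a - SN N a)))).
    by apply: ler_sum => a _; apply: point => //; exact: ltW.
  rewrite big_split /= -!mulr_sumr; apply: lerD.
    rewrite -{2}(mulr1 e3); apply: ler_wpM2l; [exact: ltW | exact: rademacher].
  apply: le_trans HqN; apply: ler_wpM2l => //; exact: tail_bound.
apply: le_lt_trans Hb _; rewrite lte_fin /e3; lra.
Qed.

End Pf.

Theorem mainTheorem2 (R : realType) :
  exists (u : (nat -> R) -> l1 R -> R) (T : (l1 R -> R) -> nat -> R),
    [/\ lattice_hom_isometry_c0_FBL u,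
        surj_lattice_hom_FBL_c0 T
      & forall x, c0 x -> T (u x) = x].
Proof.
exists (@um R), (@Tm R); split.
- split.
  + move=> x Hx; exact: FBL_um.
  + by move=> x y _ _; apply: funext => a; rewrite /um mulrDl.
  + by move=> c x _; apply: funext => a; rewrite /um mulrA.
  + move=> x y _ _; apply: funext => a; rewrite /um.
    rewrite ![_ * phi _ _]mulrC maxr_pMr //; exact: phiT_ge0.
  + move=> x Hx; exact: um_norm.
- exact: Tm_surj.
- move=> x _; exact: Tm_um.
Qed.
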